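(* Every Petri net and every VASS, viewed as an ordered functional transition system, is cover-flattable: for every initial state $x_0$, $(\mathfrak X,x_0)$ is cover-flattable.
   Context: A VASS of dimension $k$ has a finite set $Q$ of control states and finitely many transitions, each given by $q,q'\in Q$ and $\vec a,\vec b\in\mathbb N^k$ and acting as the partial map $f(q,\vec x)=(q',\vec x+\vec b-\vec a)$, defined on states of control state $q$ with $\vec x\ge\vec a$. The state space $Q\times\mathbb N^k$ is ordered by $(q,\vec x)\le(q',\vec y)$ iff $q=q'$ and $\vec x\le\vec y$ componentwise. A Petri net on $k$ places is the case of a single control state (state space $\mathbb N^k$). Ordered functional transition system: partial order plus finite set of partial monotonic maps (upward-closed domain, monotone on it), with $x\to f(x)$. $Cover(x)=\downarrow Post^*(\downarrow x)$, $Post^*$ the reachability set. Flat: there are finitely many words $w_1,\dots,w_k$ over the set of transition maps such that every fireable sequence of transitions (from the initial state considered) lies in $w_1^*\cdots w_k^*$. A morphism $\varphi:\mathfrak X_1\to\mathfrak X$ maps states to states and transition maps to transition maps such that $s'=f_1(s)$ implies $\varphi(s)\in\operatorname{dom}\varphi(f_1)$ and $\varphi(s')=\varphi(f_1)(\varphi(s))$. A monotonic flattening of $\mathfrak X$ is $(\mathfrak X_1,\varphi)$ with $\mathfrak X_1$ a flat ordered functional transition system and $\varphi$ a morphism monotone on states. $(\mathfrak X,x_0)$ is cover-flattable iff there are a monotonic flattening $(\mathfrak X_1,\varphi)$ of $\mathfrak X$ and a state $x_1$ of $\mathfrak X_1$ with $\varphi(x_1)=x_0$ and $Cover_{\mathfrak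 X}(x_0)=\downarrow\varphi\langle Cover_{\mathfrak X_1}(x_1)\rangle$. *)

(* Defs.v *)
From mathcomp Require Import all_boot.
Set Implicit Arguments. Unset Strict Implicit. Unset Printing Implicit Defensive.

Record ofts := Ofts {
  st : Type;
  le : st -> st -> Prop;
  lab : finType;
  tr : lab -> st -> option st
}.

Definition is_ofts (X : ofts) : Prop :=
  (forall x, @le X x x) /\
  (forall x y, @le X x y -> @le X y x -> x = y) /\
  (forall x y z, @le X x y -> @le X y z -> @le X x z) /\
  (forall a x y x', @le X x y -> @tr X a x = Some x' ->
      exists y', @tr X a y = Some y') /\
  (forall a x y x' y', @le X x y -> @tr X a x = Some x' -> @tr X a y = Some y' ->
      @le X x' y').

Inductive reach (X : ofts) : st X -> st X -> Prop :=
| reach_refl x : reach x x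
| reach_step a x y z : @tr X a x = Some y -> reach y z -> reach x z.

Definition cover (X : ofts) (x : st X) (z : st X) : Prop :=
  exists x' y, @le X x' x /\ reach x' y /\ @le X z y.

Fixpoint run (X : ofts) (x : st X) (w : seq (lab X)) : option (st X) :=
  match w with
  | [::] => Some x
  | a :: w' => match @tr X a x with Some y => run y w' | None => None end
  end.

Definition fireable (X : ofts) (x : st X) (w : seq (lab X)) : Prop :=
  exists y, run x w = Some y.

(* [in_bounded ws w] : w belongs to w_1^* w_2^* ... w_k^* where ws = [w_1;..;w_k]. *)
Fixpoint in_bounded (L : Type) (ws : seq (seq L)) (w : seq L) : Prop :=
  match ws with
  | [::] => w = [::]
  | wi :: ws' => exists (n : nat) (u : seq L),
      w = flatten (nseq n wi) ++ u /\ in_bounded ws' u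
  end.

Definition flat (X : ofts) (x : st X) : Prop :=
  exists ws : seq (seq (lab X)),
    forall w, fireable x w -> in_bounded ws w.

Definition morphism (X1 X : ofts) (phiS : st X1 -> st X) (phiL : lab X1 -> lab X)
  : Prop :=
  forall a s s', @tr X1 a s = Some s' -> @tr X (phiL a) (phiS s) = Some (phiS s').

Definition monotone_on_states (X1 X : ofts) (phiS : st X1 -> st X) : Prop :=
  forall s t, @le X1 s t -> @le X (phiS s) (phiS t).

Definition cover_flattable (X : ofts) (x0 : st X) : Prop :=
  exists (X1 : ofts) (phiS : st X1 -> st X) (phiL : lab X1 -> lab X) (x1 : st X1),
    is_ofts X1 /\ morphism phiS phiL /\ monotone_on_states phiS /\
    flat x1 /\ phiS x1 = x0 /\
    (forall z, cover x0 z <-> exists y, cover x1 y /\ @le X z (phiS y)).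

Definition nvec (k : nat) := {ffun 'I_k -> nat}.

Definition vle (k : nat) (x y : nvec k) : Prop := forall i, x i <= y i.

(* x + b - a, meant to be used when a <= x. *)
Definition vupd (k : nat) (x a b : nvec k) : nvec k := [ffun i => x i + b i - a i].

Record petri_net (k : nat) := PetriNet {
  pn_T : finType;
  pn_pre : pn_T -> nvec k;
  pn_post : pn_T -> nvec k
}.

Definition pn_tr (k : nat) (N : petri_net k) (t : pn_T N) (x : nvec k)
  : option (nvec k) :=
  if [forall i, pn_pre t i <= x i] then Some (vupd x (pn_pre t) (pn_post t))
  else None.

Definition pn_ofts (k : nat) (N : petri_net k) : ofts :=
  @Ofts (nvec k) (@vle k) (pn_T N) (@pn_tr k N).

Record vass (k : nat) := Vass {
  vs_Q : finType;
  vs_T : finType;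
  vs_src : vs_T -> vs_Q;
  vs_tgt : vs_T -> vs_Q;
  vs_pre : vs_T -> nvec k;
  vs_post : vs_T -> nvec k
}.

Definition vass_state (k : nat) (V : vass k) : Type := (vs_Q V * nvec k)%type.

Definition vass_le (k : nat) (V : vass k) (s s' : vass_state V) : Prop :=
  s.1 = s'.1 /\ vle s.2 s'.2.

Definition vass_tr (k : nat) (V : vass k) (t : vs_T V) (s : vass_state V)
  : option (vass_state V) :=
  if (s.1 == vs_src t) && [forall i, vs_pre t i <= s.2 i]
  then Some (vs_tgt t, vupd s.2 (vs_pre t) (vs_post t))
  else None.

Definition vass_ofts (k : nat) (V : vass k) : ofts :=
  @Ofts (vass_state V) (@vass_le k V) (vs_T V) (@vass_tr k V).

(* Main.v *)
Require Import Defs.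
From mathcomp Require Import all_boot.
From mathcomp Require Import zify.
From Stdlib Require Import ClassicalEpsilon Classical.
Set Implicit Arguments. Unset Strict Implicit. Unset Printing Implicit Defensive.

Section Inb.
Variable A : Type.
Implicit Types ws : seq (seq A).

Lemma inb_nil ws : in_bounded ws [::].
Proof. elim: ws => //= wi ws IH; exists 0, [::]; by split. Qed.

Lemma inb_cat ws1 ws2 w1 w2 :
  in_bounded ws1 w1 -> in_bounded ws2 w2 -> in_bounded (ws1 ++ ws2) (w1 ++ w2).
Proof.
elim: ws1 w1 => [|wi ws IH] w1 /=; first by move=> ->.
move=> [n [u [-> Hu]]] H2; exists n, (u ++ w2); split; first by rewrite catA.
exact: IH.
Qed.

Lemma inb_catl ws1 ws2 w : in_bounded ws1 w -> in_bounded (ws1 ++ ws2) w.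
Proof. by move=> H; rewrite -(cats0 w); apply: inb_cat => //; apply: inb_nil. Qed.

Lemma inb_catr ws1 ws2 w : in_bounded ws2 w -> in_bounded (ws1 ++ ws2) w.
Proof. by move=> H; rewrite -(cat0s w); apply: inb_cat => //; apply: inb_nil. Qed.

Lemma inb_single (p : seq A) : in_bounded [:: p] p.
Proof. exists 1, [::]; by rewrite /= !cats0. Qed.

Definition prefL ws (w : seq A) := exists w', in_bounded ws (w ++ w').

Definition pcl ws := flatten [seq w :: [seq take j w | j <- iota 0 (size w).+1] | w <- ws].

Lemma inb_take (w1 : seq A) (s : seq nat) j : j \in s ->
  in_bounded [seq take i w1 | i <- s] (take j w1).
Proof.
elim: s => //= i s IH; rewrite in_cons; case: eqP => [->|_] /= H.
  by exists 1, [::]; rewrite /= !cats0; split => //; apply: inb_nil.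
by exists 0, (take j w1); split => //; apply: IH.
Qed.

Lemma takeflat (w1 : seq A) n m : m <= size (flatten (nseq n w1)) ->
  exists a j, j <= size w1 /\ take m (flatten (nseq n w1)) = flatten (nseq a w1) ++ take j w1.
Proof.
elim: n m => [|n IH] m /=.
  move=> _; exists 0, 0; split => //; by rewrite take0.
rewrite size_cat take_cat; case: ltnP => Hm Hs.
  by exists 0, m; split; [exact: ltnW|].
have [|a [j [Hj ->]]] := IH (m - size w1); first by lia.
by exists a.+1, j; split => //; rewrite /= catA.
Qed.

Lemma pcl_ok ws w : prefL ws w -> in_bounded (pcl ws) w.
Proof.
elim: ws w => [|w1 ws IH] w [w' H].
  by move: H => /=; case: w.
move: H => [n [u [E Hu]]].
have -> : pcl (w1 :: ws) = (w1 :: [seq take j w1 | j <- iota 0 (size w1).+1]) ++ pcl ws by [].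
set F := flatten (nseq n w1) in E *.
case: (leqP (size w) (size F)) => Hs.
  have Hw : w = take (size w) F.
    have := congr1 (take (size w)) E; rewrite take_size_cat // => Ew; rewrite {1}Ew.
    rewrite take_cat; case: ltnP => // H2.
    have -> : size w = size F by lia.
    by rewrite subnn take0 cats0 take_size.
  have [a [j [Hj Ew]]] := takeflat Hs.
  rewrite Hw Ew; apply: inb_catl.
  exists a, (take j w1); split => //; apply: inb_take; by rewrite mem_iota.
have Ht : take (size F) w = F.
  by move: (congr1 (take (size F)) E); rewrite take_cat Hs take_size_cat.
have Hd : u = drop (size F) w ++ w'.
  by move: (congr1 (drop (size F)) E); rewrite drop_cat Hs drop_size_cat.
rewrite -(cat_take_drop (size F) w) Ht.
apply: inb_cat.
  by exists n, [::]; rewrite cats0; split => //; apply: inb_nil.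
apply: IH; exists w'; by rewrite -Hd.
Qed.

End Inb.

Section Gen0.
Variable X : ofts.

Lemma run_cat (x : st X) w1 w2 :
  run x (w1 ++ w2) = obind (fun y => run y w2) (run x w1).
Proof.
elim: w1 x => //= a w1 IH x; case: (tr a x) => //=.
Qed.

Lemma reach_run (x y : st X) : reach x y <-> exists w, run x w = Some y.
Proof.
split.
  elim => [z|a x' y' z H _ [w Hw]]; first by exists [::].
  by exists (a :: w) => /=; rewrite H.
move=> [w]; elim: w x => [|a w IH] x /=; first by case => ->; constructor.
case E: (tr a x) => [x'|] // H; apply: reach_step E _; exact: IH.
Qed.

End Gen0.

Section Gen.
Variable X : ofts.
Hypothesis HX : is_ofts X.

Lemma run_mono (x x' y : st X) w : le x x' -> run x w = Some y ->
  exists y', run x' w = Some y' /\ le y y'.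
Proof.
case: HX => Hr [Ha [Ht [Hd Hm]]].
elim: w x x' => [|a w IH] x x' /= Hle.
  by case => <-; exists x'.
case E: (tr a x) => [z|] // H.
have [z' E'] := Hd _ _ _ _ Hle E.
rewrite E'; apply: (IH z) => //; exact: Hm Hle E E'.
Qed.

Variable L : seq (seq (lab X)).
Variable x0 : st X.
Hypothesis HL : forall y, reach x0 y ->
  exists w z, in_bounded L w /\ run x0 w = Some z /\ le y z.

Definition tr1 (a : lab X) (s : (st X * seq (lab X))%type) :=
  match tr a s.1 with
  | Some s' => if excluded_middle_informative (prefL L (rcons s.2 a))
               then Some (s', rcons s.2 a) else None
  | None => None
  end.

Definition X1 : ofts := @Ofts (st X * seq (lab X))%type (fun a b => a = b) (lab X) tr1.

Lemma X1_ofts : is_ofts X1.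
Proof.
split; first by [].
split; first by [].
split; first by move=> x y z -> ->.
split; first by move=> a x y x' <- ->; exists x'.
by move=> a x y x' y' <- -> [].
Qed.

Lemma run1 (s : st X1) w s' : run s w = Some s' -> prefL L s.2 ->
  s'.2 = s.2 ++ w /\ prefL L s'.2 /\ run s.1 w = Some s'.1.
Proof.
elim: w s => [|a w IH] s /=; first by case => <-; rewrite cats0.
rewrite /tr1; case E: (@tr X a s.1) => [z|] //.
case: excluded_middle_informative => // Hp H _.
have [-> [Hp' Hr]] := IH _ H Hp; rewrite /= in Hr.
by rewrite /= cat_rcons in Hp' *.
Qed.

Lemma run1' (s : st X) u w z : run s w = Some z -> prefL L (u ++ w) ->
  @run X1 (s, u) w = Some (z, u ++ w).
Proof.
elim: w s u => [|a w IH] s u /=; first by case => ->; rewrite cats0.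
case E: (@tr X a s) => [s'|] // H Hp.
rewrite /tr1 /= E; case: excluded_middle_informative => Hp'.
  by rewrite /= (IH _ _ H) cat_rcons // -cat_rcons.
exfalso; apply: Hp'; move: Hp => [w' Hw']; exists (w ++ w').
by rewrite -catA in Hw'; rewrite cat_rcons.
Qed.

Lemma flattenable : cover_flattable x0.
Proof.
have Hrefl := (proj1 HX).
have Htr := (proj1 (proj2 (proj2 HX))).
exists X1, fst, id, (x0, [::]).
split; first exact: X1_ofts.
split; first by move=> a s s' /=; rewrite /tr1; case: (@tr X a s.1) => // z;
  case: excluded_middle_informative => // _ [<-].
split; first by move=> s t /= ->; apply: Hrefl.
split.
  exists (pcl L) => w [s' Hs]; apply: pcl_ok.
  have := run1 Hs; case; first by exists [::]; apply: inb_nil.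
  by move=> /= -> [].
split => // z; split.
  move=> [x' [y [Hx [Hr Hz]]]].
  have [w Hw] := proj1 (reach_run x' y) Hr.
  have [y' [Hy' Hle]] := run_mono Hx Hw.
  have [w2 [z2 [Hb [Hr2 Hle2]]]] := HL (proj2 (reach_run _ _) (ex_intro _ _ Hy')).
  exists (z2, w2); split; last by apply: Htr Hz (Htr _ _ _ Hle Hle2).
  exists (x0, [::]), (z2, w2); split => //; split => //.
  apply/(reach_run (X:=X1)); exists w2; apply: run1' => //.
  by exists [::]; rewrite cats0.
move=> [yy [[x' [y' [Hx' [Hr Hy]]]] Hz]].
rewrite /= in Hx' Hy; subst x' y'.
exists x0, yy.1; split; first exact: Hrefl.
split => //.
have [w Hw] := proj1 (reach_run (X:=X1) _ _) Hr.
have [_ [_ H]] := run1 Hw (ex_intro _ [::] (inb_nil L)).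
by apply/reach_run; exists w.
Qed.

End Gen.

Lemma minat (f : nat -> nat) a : exists n, a < n /\ forall m, a < m -> f n <= f m.
Proof.
apply: NNPP => H.
have H1 : forall n, a < n -> exists m, a < m /\ f m < f n.
  move=> n Hn; apply: NNPP => H2; apply: H; exists n; split => // m Hm.
  rewrite leqNgt; apply/negP => Hlt; apply: H2; by exists m.
have H2 : forall v n, a < n -> v <= f n.
  elim => // v IH n Hn; have [m [Hm Hlt]] := H1 n Hn.
  have := IH m Hm; lia.
have := H2 (f a.+1).+1 a.+1 (ltnSn a); lia.
Qed.

Lemma subseq_mono (f : nat -> nat) : exists g : nat -> nat,
  (forall n, g n < g n.+1) /\ forall n, f (g n) <= f (g n.+1).
Proof.
have nx : forall a, {n | a < n /\ forall m, a < m -> f n <= f m}.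
  move=> a; apply: constructive_indefinite_description; exact: minat.
pose h := fix h n := if n is n'.+1 then sval (nx (h n')) else 0.
exists (fun n => h n.+1); split => n.
  by case: (svalP (nx (h n.+1))).
have [H1 H2] := svalP (nx (h n)).
have [H3 _] := svalP (nx (h n.+1)).
apply: H2; rewrite /= in H3 *; lia.
Qed.

Lemma dickson_vec k (F : nat -> nvec k) (s : seq 'I_k) : exists g : nat -> nat,
  (forall n, g n < g n.+1) /\
  forall i, i \in s -> forall n m, n <= m -> F (g n) i <= F (g m) i.
Proof.
elim: s => [|i s [g1 [Hg1 H1]]].
  by exists id; split.
have [g2 [Hg2 H2]] := subseq_mono (fun n => F (g1 n) i).
have Hm1 : {homo g1 : a b / a < b >-> a < b}.
  apply: homo_ltn => //; exact: ltn_trans.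
have Hm2 : {homo g2 : a b / a <= b >-> a <= b}.
  apply: homo_leq => //; [exact: leq_trans| move=> n; exact: ltnW].
have Hm1' : {homo g1 : a b / a <= b >-> a <= b}.
  apply: homo_leq => //; [exact: leq_trans| move=> n; exact: ltnW].
exists (fun n => g1 (g2 n)); split.
  move=> n; apply: Hm1; exact: Hg2.
move=> j; rewrite in_cons => /orP [/eqP ->|Hj] n m Hnm.
  apply: (@homo_leq _ (fun n => F (g1 (g2 n)) i) (fun x y => x <= y)) => //.
  move=> a b c; exact: leq_trans.
apply: H1 => //; exact: Hm2.
Qed.

Lemma dickson k (V : vass k) (f : nat -> vass_state V) :
  exists i j, i < j /\ vass_le (f i) (f j).
Proof.
have [g [Hg H]] := dickson_vec (fun n => (f n).2) (enum 'I_k).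
have Hm : {homo g : a b / a < b >-> a < b}.
  apply: homo_ltn => //; exact: ltn_trans.
pose h (x : 'I_#|vs_Q V|.+1) := (f (g x)).1.
have [x [y [Hxy Eh]]] : exists x y, x <> y /\ h x = h y.
  apply: NNPP => Hn.
  have Hinj : injective h.
    move=> x y E; apply: NNPP => Hne; apply: Hn; by exists x, y.
  have := leq_card h Hinj; rewrite card_ord; lia.
have [x' [y' [Hlt Eh']]] : exists x' y' : 'I_#|vs_Q V|.+1, x' < y' /\ h x' = h y'.
  case: (ltngtP x y) => Hc.
  - by exists x, y.
  - by exists y, x.
  - by exfalso; apply: Hxy; apply: val_inj.
exists (g x'), (g y'); split; first exact: Hm.
split; first exact: Eh'.
move=> i; apply: H; [by rewrite mem_enum | exact: ltnW].
Qed.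

Section Vass.
Variables (k : nat) (V : vass k).
Notation S := (vass_state V).
Notation vrun := (@run (vass_ofts V)).

Definition addv (x D : nvec k) : nvec k := [ffun i => x i + D i].
Definition mix (O : {set 'I_k}) (x c : nvec k) : nvec k :=
  [ffun i => if i \in O then c i else x i].

Lemma vass_is_ofts : is_ofts (vass_ofts V).
Proof.
split; first by move=> x; split.
split.
  move=> [q x] [q' y] [/= -> H1] [_ H2]; congr pair; apply/ffunP => i.
  apply/eqP; rewrite eqn_leq; apply/andP; split; [exact: H1|exact: H2].
split.
  move=> x y z [E1 H1] [E2 H2]; split; first by rewrite E1.
  move=> i; exact: leq_trans (H1 i) (H2 i).
split.
  move=> a [q x] [q' y] x' [/= <- H] /=; rewrite /vass_tr /=.
  case: ifP => // /andP [Hq /forallP Hf] _.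
  rewrite Hq /=; case: ifP => [_|/negP []]; first by eexists.
  apply/forallP => i; exact: leq_trans (Hf i) (H i).
move=> a [q x] [q' y] x' y' [/= <- H] /=; rewrite /vass_tr /=.
case: ifP => // /andP [Hq /forallP Hf] [<-].
case: ifP => // /andP [_ /forallP Hf'] [<-]; split => // i /=.
rewrite !ffunE; have := Hf i; have := Hf' i; have := H i; lia.
Qed.

Lemma vtr_add t (s s' : S) D : vass_tr t s = Some s' ->
  vass_tr t (s.1, addv s.2 D) = Some (s'.1, addv s'.2 D).
Proof.
rewrite /vass_tr /=; case: ifP => // /andP [Hq /forallP Hf] [<-].
rewrite Hq /=; case: ifP => [_|/negP []].
  congr Some; congr pair; apply/ffunP => i; rewrite !ffunE; have := Hf i; lia.
apply/forallP => i; rewrite ffunE; have := Hf i; lia.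
Qed.

Lemma vrun_add (s y : S) w D : vrun s w = Some y ->
  vrun (s.1, addv s.2 D) w = Some (y.1, addv y.2 D).
Proof.
elim: w s => [|a w IH] s /=; first by case => <-.
case E: (vass_tr a s) => [s'|] // H.
by rewrite (vtr_add D E); apply: IH.
Qed.

Lemma vrun_mono (s s' y : S) w : vass_le s s' -> vrun s w = Some y ->
  exists y', vrun s' w = Some y' /\ vass_le y y'.
Proof. exact: (run_mono vass_is_ofts). Qed.

Lemma pump (O : {set 'I_k}) q a b u : vrun (q, a) u = Some (q, b) ->
  (forall i, i \notin O -> a i <= b i) -> forall (N : nat) (T : nvec k),
  exists (D b' : nvec k), (forall i, i \notin O -> D i = 0) /\
    vrun (q, addv a D) (flatten (nseq N u)) = Some (q, b') /\
    (forall i, i \in O -> T i <= b' i) /\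
    (forall i, i \notin O -> b' i = a i + N * (b i - a i)).
Proof.
move=> Hr Hab N T; elim: N => [|N [D' [b'' [HD' [Hr' [HT Hb]]]]]].
  exists [ffun i => if i \in O then T i else 0],
    (addv a [ffun i => if i \in O then T i else 0]).
  split; first by move=> i /negbTE Hi; rewrite ffunE Hi.
  split => //.
  split; first by move=> i Hi; rewrite !ffunE Hi; lia.
  by move=> i /negbTE Hi; rewrite !ffunE Hi; lia.
pose D := [ffun i => D' i + (if i \in O then a i else 0)].
pose E := [ffun i => if i \in O then b i else b i - a i].
exists D, (addv b'' E).
split; first by move=> i Hi; rewrite ffunE HD' // (negbTE Hi).
split.
  rewrite /= run_cat (vrun_add D Hr) /=.
  have -> : addv b D = addv (addv a D') E.
    apply/ffunP => i; rewrite !ffunE; case: ifP => Hi; first lia.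
    rewrite HD' ?Hi //; have := Hab i; rewrite Hi; move=> /(_ isT); lia.
  exact: (vrun_add E Hr').
split.
  by move=> i Hi; rewrite !ffunE Hi; have := HT i Hi; lia.
move=> i Hi; rewrite !ffunE (negbTE Hi) Hb //; have := Hab i Hi; nia.
Qed.

End Vass.

Section Core.
Variables (k : nat) (V : vass k).
Notation S := (vass_state V).
Notation vrun := (@run (vass_ofts V)).
Notation T := (vs_T V).

Definition Outer (O : {set 'I_k}) := forall (q : vs_Q V) (x : nvec k),
  exists L : seq (seq T), forall (c : nvec k) (y : S),
  @reach (vass_ofts V) (q, mix O x c) y ->
  exists (c' : nvec k) (w : seq T) (z : S),
    in_bounded L w /\ vrun (q, mix O x c') w = Some z /\ vass_le y z.

Variable O : {set 'I_k}.
Hypothesis OIH : forall O' : {set 'I_k}, O \proper O' -> Outer O'.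
Variables (q0 : vs_Q V) (x0 : nvec k).

Definition conc (c : nvec k) : S := (q0, mix O x0 c).
Definition leO (s t : S) := s.1 = t.1 /\ forall i, i \notin O -> s.2 i <= t.2 i.
Definition agr (s t : S) := s.1 = t.1 /\ forall i, i \notin O -> s.2 i = t.2 i.

Lemma agr_run w (s t s' t' : S) : agr s t -> vrun s w = Some s' ->
  vrun t w = Some t' -> agr s' t'.
Proof.
elim: w s t => [|a w IH] s t /=; first by move=> H [<-] [<-].
move=> [Hq Hi]; rewrite /vass_tr.
case: ifP => // /andP [/eqP Hs _]; case: ifP => // /andP [/eqP Ht _].
apply: IH; split => // i Hn; by rewrite !ffunE (Hi i Hn).
Qed.

Lemma conc_agr c1 c2 : agr (conc c1) (conc c2).
Proof. by split => // i Hi; rewrite !ffunE (negbTE Hi). Qed.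

Lemma leO_agr s s' t t' : agr s s' -> agr t t' -> leO s t -> leO s' t'.
Proof.
move=> [H1 H2] [H3 H4] [H5 H6]; split; first by rewrite -H1 -H3.
move=> i Hi; rewrite -H2 // -H4 //; exact: H6.
Qed.

Lemma mix_add (x c D : nvec k) : (forall i, i \notin O -> D i = 0) ->
  mix O x (addv c D) = addv (mix O x c) D.
Proof.
move=> HD; apply/ffunP => i; rewrite !ffunE; case: ifP => // /negbT Hi.
by rewrite HD // addn0.
Qed.

Lemma conc_add (c D : nvec k) : (forall i, i \notin O -> D i = 0) ->
  conc (addv c D) = ((conc c).1, addv (conc c).2 D).
Proof. by move=> HD; rewrite /conc /= mix_add. Qed.

Lemma run_split (s : S) v w y : vrun s (v ++ w) = Some y ->
  exists z, vrun s v = Some z /\ vrun z w = Some y.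
Proof. by rewrite run_cat; case: (vrun s v) => //= z H; exists z. Qed.

Definition pathok (v : seq T) := exists c y, vrun (conc c) v = Some y.
Definition goodpair (v : seq T) m1 m2 := exists c s1 s2,
  vrun (conc c) (take m1 v) = Some s1 /\ vrun (conc c) (take m2 v) = Some s2 /\ leO s1 s2.
Definition Bad (v : seq T) := forall m1 m2, m1 < m2 -> m2 <= size v -> ~ goodpair v m1 m2.
Definition R (v' v : seq T) := exists t, v' = rcons v t /\ Bad v' /\ pathok v'.

Lemma acc_nil : Acc R [::].
Proof.
apply: NNPP => H0.
have step : forall v, ~ Acc R v -> exists v', R v' v /\ ~ Acc R v'.
  move=> v Hv; apply: NNPP => H; apply: Hv; constructor => v' Hr.
  apply: NNPP => Ha; apply: H; by exists v'.
pose W := {v | ~ Acc R v}.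
have nx : forall w : W, {w' : W | R (sval w') (sval w)}.
  move=> [v Hv]; have Hex := step v Hv.
  apply: constructive_indefinite_description.
  case: Hex => v' [Hr Ha]; by exists (exist _ v' Ha).
pose it := fix it (n : nat) : W :=
  match n with 0 => exist (fun v => ~ Acc R v) [::] H0 | n'.+1 => sval (nx (it n')) end.
have Hrel : forall n, R (sval (it n.+1)) (sval (it n)).
  move=> n; exact: (svalP (nx (it n))).
have Hsz : forall n, size (sval (it n)) = n.
  elim => // n IH; have [t [-> _]] := Hrel n; by rewrite size_rcons IH.
have Htk : forall m d, take m (sval (it (m + d))) = sval (it m).
  move=> m; elim => [|d IH]; first by rewrite addn0 -{1}(Hsz m) take_size.
  have [t [E _]] := Hrel (m + d); rewrite addnS E -cats1 takel_cat ?IH //.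
  by rewrite Hsz leq_addr.
have pk : forall n, exists p : nvec k * S, vrun (conc p.1) (sval (it n)) = Some p.2.
  case => [|n]; first by exists (x0, conc x0).
  have [_ [_ [_ [c [y Hy]]]]] := Hrel n; by exists (c, y).
pose ff n := sval (constructive_indefinite_description _ (pk n)).
have Hff : forall n, vrun (conc (ff n).1) (sval (it n)) = Some (ff n).2.
  move=> n; exact: (svalP (constructive_indefinite_description _ (pk n))).
have [i [j [Hij Hle]]] := dickson (fun n => (ff n).2).
have [j' Ej] : exists j', j = j'.+1 by exists j.-1; lia.
have [_ [_ [HB _]]] := Hrel j'; rewrite -Ej in HB.
apply: (HB i j Hij); first by rewrite Hsz.
have Ei : sval (it j) = take i (sval (it j)) ++ drop i (sval (it j)) by rewrite cat_take_drop.
have := Hff j; rewrite {1}Ei => /run_split [s1 [Hs1 _]].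
exists (ff j).1, s1, (ff j).2; split => //.
have Htj : take j (sval (it j)) = sval (it j) by rewrite -{1}(Hsz j) take_size.
split; first by rewrite Htj Hff.
have Hti : take i (sval (it j)) = sval (it i).
  have -> : j = i + (j - i) by lia.
  exact: Htk.
apply: (@leO_agr (ff i).2 s1 (ff j).2 (ff j).2).
- rewrite Hti in Hs1; exact: agr_run (conc_agr _ _) (Hff i) Hs1.
- by split.
- case: Hle => H1 H2; split => // l _; exact: H2.
Qed.


Definition DomL (L : seq (seq T)) (y : S) := exists c' w z,
  in_bounded L w /\ vrun (conc c') w = Some z /\ vass_le y z.
Definition Sh n (y : S) := exists c2 w2 y2,
  size w2 < n /\ vrun (conc c2) w2 = Some y2 /\ vass_le y y2.
Definition Gp (v : seq T) L := forall c w y,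
  vrun (conc c) (v ++ w) = Some y -> DomL L y \/ Sh (size (v ++ w)) y.

Lemma DomL_catl L1 L2 y : DomL L1 y -> DomL (L1 ++ L2) y.
Proof. by move=> [c [w [z [H1 H2]]]]; exists c, w, z; split => //; apply: inb_catl. Qed.
Lemma DomL_catr L1 L2 y : DomL L2 y -> DomL (L1 ++ L2) y.
Proof. by move=> [c [w [z [H1 H2]]]]; exists c, w, z; split => //; apply: inb_catr. Qed.

Lemma combine (v : seq T) (s : seq T) : (forall t, exists L, Gp (rcons v t) L) ->
  exists L, forall t, t \in s -> Gp (rcons v t) L.
Proof.
move=> H; elim: s => [|t s [L HL]]; first by exists [::].
have [Lt HLt] := H t.
exists (Lt ++ L) => t'; rewrite in_cons => /orP [/eqP ->|Ht'] c w y Hr.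
  case: (HLt c w y Hr) => [Hd|Hs]; [left; exact: DomL_catl|by right].
case: (HL t' Ht' c w y Hr) => [Hd|Hs]; [left; exact: DomL_catr|by right].
Qed.

Lemma vle_refl (s : S) : vass_le s s.
Proof. exact: (proj1 (vass_is_ofts V)). Qed.
Lemma vle_trans (s t u : S) : vass_le s t -> vass_le t u -> vass_le s u.
Proof. exact: (proj1 (proj2 (proj2 (vass_is_ofts V)))). Qed.

Lemma G v : Acc R v -> Bad v -> pathok v -> exists L, Gp v L.
Proof.
elim=> {}v _ IH HB Hp.
have Ht : forall t, exists L, Gp (rcons v t) L.
  move=> t.
  case: (classic (pathok (rcons v t))) => Hpt; last first.
    exists [::] => c w y H; exfalso; apply: Hpt.
    have [z [Hz _]] := run_split H; by exists c, z.
  case: (classic (Bad (rcons v t))) => Hbt.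
    apply: IH => //; by exists t.
  have [m1 [m2 [Hm12 [Hm2 Hg]]]] : exists m1 m2, m1 < m2 /\
      m2 <= size (rcons v t) /\ goodpair (rcons v t) m1 m2.
    apply: NNPP => Hn; apply: Hbt => m1 m2 H1 H2 H3; apply: Hn; by exists m1, m2.
  have Em2 : m2 = size (rcons v t).
    move: Hm2; rewrite size_rcons leq_eqVlt ltnS => /orP [/eqP //|Hle].
    exfalso; apply: (HB m1 m2 Hm12 Hle).
    move: Hg => [c [s1 [s2 [H1 [H2 H3]]]]]; exists c, s1, s2.
    rewrite -!cats1 !takel_cat in H1 H2 => //; lia.
  subst m2; move: Hg => [c0 [A0 [B0 [HA0 [HB0 HAB]]]]]; rewrite take_size in HB0.
  move: Hm12 HA0 HB0; set v' := rcons v t => Hm12 HA0 HB0.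
  have Hdec : forall c w y, vrun (conc c) (v' ++ w) = Some y -> exists A B,
      vrun (conc c) (take m1 v') = Some A /\ vrun A (drop m1 v') = Some B /\
      vrun B w = Some y /\ agr A0 A /\ agr B0 B.
    move=> c w y H; have [B [HB' Hy]] := run_split H.
    have := HB'; rewrite -{1}(cat_take_drop m1 v') => /run_split [A [HA HAB']].
    exists A, B; split => //; split => //; split => //; split.
      exact: agr_run (conc_agr c0 c) HA0 HA.
    exact: agr_run (conc_agr c0 c) HB0 HB'.
  case: (classic (forall i, i \notin O -> A0.2 i = B0.2 i)) => Heq.
    exists [::] => c w y H; right.
    have [A [B [HA [HAB' [HBy [[HqA HiA] [HqB HiB]]]]]]] := Hdec c w y H.
    pose D : nvec k := [ffun i => if i \in O then B.2 i else 0].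
    have HD : forall i, i \notin O -> D i = 0 by move=> i /negbTE Hi; rewrite ffunE Hi.
    have HA' := vrun_add D HA.
    have Hle : vass_le B (A.1, addv A.2 D).
      split => /=; first by rewrite -HqB -(proj1 HAB) HqA.
      move=> i; rewrite ffunE; case: (boolP (i \in O)) => Hi.
        rewrite ffunE Hi; lia.
      rewrite -HiB // -Heq // HiA //; lia.
    have [y' [Hy' Hyy']] := vrun_mono Hle HBy.
    exists (addv c D), (take m1 v' ++ w), y'.
    split; first by rewrite !size_cat size_take; case: ifP => Hc; rewrite ltn_add2r //; move: Hc; rewrite Hm12.
    split => //.
    by rewrite run_cat conc_add // HA' /=.
  have [l [Hl Hne]] : exists l, l \notin O /\ A0.2 l <> B0.2 l.
    apply: NNPP => Hn; apply: Heq => i Hi; apply: NNPP => Hne; apply: Hn; by exists i.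
  pose O' := O :|: [set i | A0.2 i < B0.2 i].
  have HOp : O \proper O'.
    apply/properP; split; first by apply: subsetUl.
    exists l => //; rewrite !inE (negbTE Hl) /=; have := (proj2 HAB) l Hl; lia.
  have [Lh HLh] := OIH HOp B0.1 B0.2.
  exists ([:: take m1 v'; drop m1 v'] ++ Lh) => c w y H; left.
  have [[qa a] [[qb b] [HA [HAB' [HBy [[HqA HiA] [HqB HiB]]]]]]] := Hdec c w y H.
  rewrite /= in HqA HiA HqB HiB.
  have EB : (qb, b) = (B0.1, mix O' B0.2 b).
    congr pair; first by rewrite HqB.
    apply/ffunP => i; rewrite ffunE; case: ifP => // Hi.
    move/negbT: Hi; rewrite !inE negb_or => /andP [Hi1 _]; by rewrite HiB.
  have Hreach : @reach (vass_ofts V) (B0.1, mix O' B0.2 b) y.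
    by apply/reach_run; exists w; rewrite -EB.
  have [c4 [w4 [z4 [Hw4 [Hr4 Hyz4]]]]] := HLh _ _ Hreach.
  have Hqab : qb = qa by rewrite -HqB -HqA (proj1 HAB).
  subst qb; rewrite Hqab in HAB'.
  have Hab : forall i, i \notin O -> a i <= b i.
    move=> i Hi; rewrite -HiA // -HiB //; exact: (proj2 HAB).
  pose N := \max_(i < k) c4 i.
  have [D [b' [HD [Hrp [HT Hb']]]]] := pump HAB' Hab N c4.
  have Hle : vass_le (B0.1, mix O' B0.2 c4) (qa, b').
    split; first by rewrite /= Hqab.
    move=> i /=; rewrite ffunE; case: ifP => Hi.
      case: (boolP (i \in O)) => HiO; first by apply: HT.
      rewrite Hb' //; move: Hi; rewrite !inE (negbTE HiO) /= => Hlt.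
      have Hab' : a i < b i by rewrite -HiA // -HiB.
      have HN : c4 i <= N := leq_bigmax i.
      nia.
    move/negbT: Hi; rewrite !inE negb_or => /andP [HiO Hlt].
    rewrite Hb' //; have := HiA i HiO; have := HiB i HiO; have := (proj2 HAB) i HiO.
    move: Hlt; rewrite -leqNgt; lia.
  have [z5 [Hr5 Hz45]] := vrun_mono Hle Hr4.
  exists (addv c D), (take m1 v' ++ (flatten (nseq N (drop m1 v')) ++ w4)), z5.
  split.
    rewrite catA; apply: inb_cat => //.
    exists 1, (flatten (nseq N (drop m1 v'))); split; first by rewrite /= cats0.
    by exists N, [::]; rewrite cats0.
  split; last exact: vle_trans Hyz4 Hz45.
  by rewrite run_cat conc_add // (vrun_add D HA) /= run_cat Hrp /=.
have [Lall HLall] := combine (enum T) Ht.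
exists ([:: v] ++ Lall) => c w y; case: w => [|t w] H.
  left; exists c, v, y; split; first by apply: inb_catl; apply: inb_single.
  by rewrite cats0 in H; split => //; apply: vle_refl.
have := HLall t (mem_enum _ t) c w y; rewrite cat_rcons => /(_ H) [Hd|Hs].
  by left; apply: DomL_catr.
by right.
Qed.

Lemma inner : exists L, forall c w y, vrun (conc c) w = Some y -> DomL L y.
Proof.
have [||L HL] := G acc_nil.
- by move=> m1 m2 H1 /= H2; lia.
- by exists x0, (conc x0).
exists L => c w.
move: {2}(size w) (leqnn (size w)) => n; elim: n c w => [|n IHn] c w Hs y H.
  case: (HL c w y H) => // [[c2 [w2 [y2 [Hlt _]]]]].
  by have := leq_trans Hlt Hs.
case: (HL c w y H) => // [[c2 [w2 [y2 [Hlt [Hr Hle]]]]]].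
have [|c3 [w3 [z3 [H3 [H4 H5]]]]] := IHn c2 w2 _ y2 Hr.
  by have := leq_trans Hlt Hs; rewrite ltnS.
exists c3, w3, z3; split => //; split => //; exact: vle_trans Hle H5.
Qed.

End Core.

Lemma outer_all k (V : vass k) (O : {set 'I_k}) : Outer V O.
Proof.
suff H : forall n (O : {set 'I_k}), #|~: O| < n -> Outer V O by apply: (H #|~: O|.+1).
elim => [|n IH] O' Hn //.
move=> q x.
have OIH : forall O2 : {set 'I_k}, O' \proper O2 -> Outer V O2.
  move=> O2 Hp; apply: IH.
  have Hp' : ~: O2 \proper ~: O' by rewrite properC.
  have := proper_card Hp'; lia.
have [L HL] := inner OIH q x.
exists L => c y /reach_run [w Hw].
have [c' [w' [z [H1 [H2 H3]]]]] := HL c w y Hw.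
by exists c', w', z.
Qed.

Lemma vass_L k (V : vass k) (x0 : vass_state V) : exists L,
  forall y, @reach (vass_ofts V) x0 y ->
  exists w z, in_bounded L w /\ @run (vass_ofts V) x0 w = Some z /\ vass_le y z.
Proof.
case: x0 => q x.
have [L HL] := @outer_all k V set0 q x.
have Emix : forall c, mix set0 x c = x by move=> c; apply/ffunP => i; rewrite ffunE inE.
exists L => y Hy.
have [c' [w [z [H1 [H2 H3]]]]] := HL x y ltac:(by rewrite Emix).
by exists w, z; rewrite Emix in H2.
Qed.

Definition pv k (N : petri_net k) : vass k :=
  @Vass k unit (pn_T N) (fun _ => tt) (fun _ => tt) (@pn_pre k N) (@pn_post k N).

Lemma pn_run k (N : petri_net k) x w :
  @run (vass_ofts (pv N)) (tt, x) w = omap (fun y => (tt, y)) (@run (pn_ofts N) x w).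
Proof.
elim: w x => //= a w IH x; rewrite /vass_tr /pn_tr /=.
by case: ifP => _; rewrite ?IH.
Qed.

Lemma pn_is_ofts k (N : petri_net k) : is_ofts (pn_ofts N).
Proof.
split; first by move=> x i.
split.
  move=> x y H1 H2; apply/ffunP => i.
  apply/eqP; rewrite eqn_leq; apply/andP; split; [exact: H1|exact: H2].
split; first by move=> x y z H1 H2 i; exact: leq_trans (H1 i) (H2 i).
split.
  move=> a x y x' H /=; rewrite /pn_tr.
  case: ifP => // /forallP Hf _.
  case: ifP => [_|/negP []]; first by eexists.
  apply/forallP => i; exact: leq_trans (Hf i) (H i).
move=> a x y x' y' H /=; rewrite /pn_tr.
case: ifP => // /forallP Hf [<-].
case: ifP => // /forallP Hf' [<-] i.
rewrite !ffunE; have := Hf i; have := Hf' i; have := H i; lia.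
Qed.

Theorem corollary5p27 :
  (forall (k : nat) (N : petri_net k) (x0 : st (pn_ofts N)),
      is_ofts (pn_ofts N) /\ cover_flattable x0) /\
  (forall (k : nat) (V : vass k) (x0 : st (vass_ofts V)),
      is_ofts (vass_ofts V) /\ cover_flattable x0).
Proof.
split.
  move=> k N x0; split; first exact: pn_is_ofts.
  have [L HL] := vass_L (tt : vs_Q (pv N), x0).
  apply: (flattenable (pn_is_ofts N) (L := L)) => y /reach_run [w Hw].
  have Hv : @reach (vass_ofts (pv N)) (tt, x0) (tt, y).
    by apply/reach_run; exists w; rewrite pn_run Hw.
  have [w' [z [H1 [H2 [_ H3]]]]] := HL _ Hv.
  move: H2; rewrite pn_run; case E: (@run (pn_ofts N) x0 w') => [z'|] //= [Ez].
  by exists w', z'; split => //; split => //; rewrite -Ez in H3.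
move=> k V x0; split; first exact: vass_is_ofts.
have [L HL] := vass_L x0.
exact: (flattenable (vass_is_ofts V) HL).
Qed.
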